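(* Let $G$ be a finite simple graph which is either bipartite or very well-covered, let $K$ be a field and $S=K[x_v : v\in V(G)]$. Then $\operatorname{reg}(S/NI(G))\geq \tau(G)$.
   Context: For a vertex $v$, $N_G[v]$ is the closed neighborhood of $v$ ($v$ together with its neighbors). The closed neighborhood ideal is $NI(G)=\big(\prod_{w\in N_G[v]} x_w : v\in V(G)\big)\subseteq S$. $\tau(G)$ is the minimum size of a vertex cover of $G$ (a set of vertices meeting every edge). A graph $G$ is very well-covered if it has no isolated vertices and every maximal independent set of $G$ has exactly $|V(G)|/2$ elements. $\operatorname{reg}$ denotes Castelnuovo–Mumford regularity; $K$ is an infinite field. *)

(* Defs.v *)
From mathcomp Require Import all_boot all_order all_algebra.
Set Implicit Arguments. Unset Strict Implicit. Unset Printing Implicit Defensive.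
Import GRing.Theory.

(* A finite simple graph on the vertex type T is given by an edge relation
   e : rel T which is symmetric and irreflexive; V(G) = T. *)
Section Graph.
Variable T : finType.
Variable e : rel T.

Definition simple_graph : Prop := symmetric e /\ irreflexive e.

Definition closed_nbhd (v : T) : {set T} := [set w | (w == v) || e v w].

Definition bipartite : Prop :=
  exists A : {set T}, forall x y, e x y -> (x \in A) != (y \in A).

Definition independent (S : {set T}) : bool :=
  [forall x in S, forall y in S, ~~ e x y].

Definition maximal_independent (S : {set T}) : bool :=
  independent S && [forall z, (z \notin S) ==> ~~ independent (z |: S)].

Definition very_well_covered : Prop :=
  (forall v, exists w, e v w) /\
  (forall S : {set T}, maximal_independent S -> #|S|.*2 = #|T|).

Definition vertex_cover (C : {set T}) : bool :=
  [forall x, forall y, e x y ==> (x \in C) || (y \in C)].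

(* tau(G): minimum size of a vertex cover (T itself is one) *)
Definition tau : nat := \big[minn/#|T|]_(C : {set T} | vertex_cover C) #|C|.

(* A monomial x^m (m : T -> nat) lies in the monomial ideal
   NI(G) = (prod_{w in N[v]} x_w : v in V) iff some generator divides it. *)
Definition in_NI (m : T -> nat) : bool :=
  [exists v, [forall w in closed_nbhd v, 0 < m w]].

(* Graded Betti numbers of S/NI(G) over K:
   beta_{i,j} = dim_K Tor_i^S(S/NI(G), K)_j, computed as the homology
   H_i(x; S/NI(G))_j of the Koszul complex on the variables tensored with
   S/NI(G).  The degree-j part of the i-th Koszul module has K-basis the
   pairs (m, F) with x^m a standard monomial (not in NI(G)) of degree j - i
   and F a set of i variables (e_F = wedge of e_k, k in F). *)
Definition koszul_pred (i j : nat) (x : {ffun T -> 'I_j.+1} * {set T}) : bool :=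
  [&& (\sum_v (x.1 v : nat)) + #|x.2| == j, #|x.2| == i
    & ~~ in_NI (fun v => (x.1 v : nat))].

Definition KB (i j : nat) := {x : {ffun T -> 'I_j.+1} * {set T} | @koszul_pred i j x}.

Variable K : fieldType.

Definition ksign (F : {set T}) (k : T) : K :=
  (-1)%R ^+ #|[set u in F | (enum_rank u < enum_rank k)%N]|.

(* Koszul differential: m (x) e_F |-> sum_{k in F} sign * (x_k m) (x) e_{F\k},
   where x_k m = 0 in S/NI(G) when it lies in NI(G) (no basis element). *)
Definition kentry (i j : nat) (a : KB i.+1 j) (b : KB i j) : K :=
  \sum_(k in (val a).2 | ((val b).2 == (val a).2 :\ k) &&
        [forall v, ((val b).1 v : nat) == ((val a).1 v : nat) + (v == k)])
    ksign (val a).2 k.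

(* matrix of d : K_{i+1,j} -> K_{i,j} (row-vector convention) *)
Definition kmat (i j : nat) : 'M[K]_(#|{: KB i.+1 j}|, #|{: KB i j}|) :=
  \matrix_(a, b) kentry (enum_val a) (enum_val b).

(* dim H_i = dim K_{i,j} - rank(d_i : K_i -> K_{i-1}) - rank(d_{i+1}) *)
Definition betti (i j : nat) : nat :=
  #|{: KB i j}| - (if i is i'.+1 then \rank (kmat i' j) else 0%N)
                - \rank (kmat i j).

(* reg(S/NI(G)) = max { j - i : betti i j <> 0 };  reg >= t  iff some
   nonzero betti i j has j - i >= t. *)
Definition reg_ge (t : nat) : Prop := exists i j : nat, betti i j <> 0%N /\ (t + i <= j)%N.

End Graph.

(* Main.v *)
Require Import Defs.
From mathcomp Require Import all_boot all_order all_algebra.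
From mathcomp Require Import ring zify.
Set Implicit Arguments. Unset Strict Implicit. Unset Printing Implicit Defensive.
Import GRing.Theory.

Section Alg.
Variables (T : finType) (e : rel T) (K : fieldType).
Local Open Scope ring_scope.

Lemma in_NI_ext (m m' : T -> nat) : m =1 m' -> in_NI e m = in_NI e m'.
Proof.
move=> H; rewrite /in_NI; apply: eq_existsb => v; apply: eq_forallb => w.
by rewrite H.
Qed.

Lemma in_NI_mono (m m' : T -> nat) : (forall v, (m v <= m' v)%N) -> in_NI e m -> in_NI e m'.
Proof.
move=> H /existsP[v /forallP Hv]; apply/existsP; exists v; apply/forallP => w.
apply/implyP => Hw; have := implyP (Hv w) Hw; move=> h; exact: (leq_trans h (H w)).
Qed.

Lemma leq_sum_term (f : T -> nat) v : (f v <= \sum_u f u)%N.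
Proof. by rewrite (bigD1 v) //= leq_addr. Qed.

Lemma sum_delta (k : T) : (\sum_v (v == k) = 1)%N.
Proof.
rewrite (bigD1 k) //= eqxx big1 // => v /negbTE ->; done.
Qed.

Definition mv i j (b : KB e i j) : T -> nat := fun v => ((val b).1 v : nat).

Lemma kentry_sum i j (a : KB e i.+1 j) (Psi : (T -> nat) -> {set T} -> K) :
  (forall m m' F, m =1 m' -> Psi m F = Psi m' F) ->
  (forall k, k \in (val a).2 ->
     Psi (fun v => mv a v + (v == k))%N ((val a).2 :\ k) != 0 ->
     ~~ in_NI e (fun v => mv a v + (v == k))%N) ->
  \sum_(b : KB e i j) kentry K a b * Psi (mv b) (val b).2 =
  \sum_(k in (val a).2) ksign K (val a).2 k *
      Psi (fun v => mv a v + (v == k))%N ((val a).2 :\ k).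
Proof.
move=> Pext Pnz.
rewrite /kentry.
under eq_bigr => b _ do rewrite mulr_suml big_mkcondr.
rewrite exchange_big /=.
apply: eq_bigr => k kF.
rewrite -big_mkcond /=.
set Pk := Psi _ _.
case: (eqVneq Pk 0) => [Pk0|Pkn0].
  rewrite Pk0 mulr0 big1 // => b /andP[/eqP FE /forallP mE].
  rewrite (Pext _ (fun v => mv a v + (v == k))%N); last by move=> v; exact/eqP/mE.
  by rewrite FE -/Pk Pk0 mulr0.
have nNI := Pnz k kF Pkn0.
case/andP: (svalP a) => /eqP sumA /andP[/eqP cardA _].
have bnd v : (mv a v + (v == k) < j.+1)%N.
  rewrite ltnS; apply: (leq_trans _ (eq_leq sumA)); apply: leq_add; first exact: (leq_sum_term (mv a)).
  by case: (v == k) => //; rewrite card_gt0; apply/set0Pn; exists k.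
pose m0 : {ffun T -> 'I_j.+1} := [ffun v => inord (mv a v + (v == k))].
have m0E v : (m0 v : nat) = (mv a v + (v == k))%N by rewrite ffunE inordK.
have P0 : koszul_pred e i (m0, (val a).2 :\ k).
  rewrite /koszul_pred /=.
  have cE : #|(val a).2 :\ k| = i by have := cardsD1 k (val a).2; rewrite kF cardA add1n => -[].
  rewrite cE eqxx /=.
  under eq_bigr => v _ do rewrite m0E.
  rewrite big_split /= sum_delta; apply/andP; split.
    apply/eqP; apply: (etrans _ sumA); rewrite cardA; rewrite /mv.
    by rewrite addn1 addSnnS.
  by rewrite (in_NI_ext (m' := fun v => (mv a v + (v == k))%N)).
pose b0 : KB e i j := exist _ (m0, (val a).2 :\ k) P0.
rewrite (bigD1 b0) /=; last first.
  rewrite eqxx /=; apply/forallP => v; by rewrite m0E.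
rewrite big1 ?addr0.
  by rewrite (Pext _ (fun v => mv a v + (v == k))%N) // => v; rewrite /mv /= m0E.
move=> b /andP[/andP[/eqP FE /forallP mE] neq].
case/eqP: neq; apply: val_inj => /=.
case: (val b) FE mE => mb Fb /= -> mE; congr (_, _).
apply/ffunP => v; apply: val_inj => /=; rewrite m0E; exact/eqP/mE.
Qed.

End Alg.

Section Alg2.
Variables (T : finType) (e : rel T) (K : fieldType).
Local Open Scope ring_scope.

Definition sg (b : bool) : K := if b then -1 else 1.
Definition rk (u : T) : nat := enum_rank u.

Lemma sgE (b : bool) : (-1) ^+ b = sg b :> K.
Proof. by case: b; rewrite /sg ?expr1 ?expr0. Qed.

Lemma sg_neq0 b : sg b != 0.
Proof. by case: b; rewrite /sg ?oppr_eq0 oner_eq0. Qed.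

Lemma sgM b c : sg b * sg c = sg (b (+) c).
Proof. by case: b; case: c; rewrite /sg ?mulrN ?mulNr ?mulr1 ?opprK. Qed.

Lemma sg2 b : sg b * sg b = 1.
Proof. by rewrite sgM addbb. Qed.

Lemma rk_inj : injective rk.
Proof. by move=> u v /ord_inj /enum_rank_inj. Qed.

Lemma ksignD1 (F : {set T}) (k l : T) : l \in F ->
  ksign K F k = sg (rk l < rk k)%N * ksign K (F :\ l) k.
Proof.
move=> lF; rewrite /ksign.
rewrite (cardsD1 l) exprD sgE inE lF /=; congr (_ * _).
congr (_ ^+ _); apply: eq_card => u; rewrite !inE.
by case: (u == l).
Qed.

Lemma ksign_swap (F : {set T}) (k l : T) : k \in F -> l \in F -> k != l ->
  ksign K F l * ksign K (F :\ l) k = - (ksign K F k * ksign K (F :\ k) l).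
Proof.
move=> kF lF kl.
rewrite (ksignD1 l kF) (ksignD1 k lF).
have ne : rk k != rk l by apply: contra kl => /eqP/rk_inj ->.
rewrite -!mulrA -mulNr [ksign K (F :\ l) k * _]mulrC; congr (_ * _).
case: ltngtP ne => // _ _; by rewrite /sg opprK.
Qed.

Lemma dsum0 (f : T -> T -> K) : (forall k l, f l k = - f k l) -> (forall k, f k k = 0) ->
  \sum_k \sum_l f k l = 0.
Proof.
move=> Hanti Hdiag.
pose g k l := if (rk k < rk l)%N then f k l else 0.
have E : forall k l, f k l = g k l - g l k.
  move=> k l; rewrite /g; case: ltngtP => H.
  - by rewrite subr0.
  - by rewrite sub0r Hanti.
  - by rewrite (rk_inj H) Hdiag subrr.
under eq_bigr => k _ do under eq_bigr => l _ do rewrite E.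
under eq_bigr => k _ do rewrite sumrB.
rewrite sumrB [X in _ - X]exchange_big /=; exact: subrr.
Qed.

Lemma sum_enum (I : finType) (F : I -> K) : \sum_(i < #|{: I}|) F (enum_val i) = \sum_i F i.
Proof. by rewrite -big_enum_val. Qed.

Lemma kmat_sq i j : kmat e K i.+1 j *m kmat e K i j = 0.
Proof.
apply/matrixP => a c; rewrite !mxE.
under eq_bigr => b _ do rewrite !mxE.
rewrite (sum_enum (fun b => kentry K (enum_val a) b * kentry K b (enum_val c))).
set a' := enum_val a; set c' := enum_val c.
pose Psi (m : T -> nat) (F : {set T}) :=
  \sum_(l in F | ((val c').2 == F :\ l) && [forall v, ((val c').1 v : nat) == m v + (v == l)]%N)
     ksign K F l.
have -> : \sum_b kentry K a' b * kentry K b c' = \sum_b kentry K a' b * Psi (mv b) (val b).2 by [].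
rewrite kentry_sum; first last.
- move=> k kF Hnz; apply/negP => HNI; move: Hnz.
  rewrite /Psi big1 ?eqxx // => l /andP[_ /andP[_ /forallP Hm]].
  case/andP: (svalP c') => _ /andP[_ HNc]; case/negP: HNc.
  apply: in_NI_mono HNI => v; rewrite (eqP (Hm v)); exact: leq_addr.
- move=> m m' F H; rewrite /Psi; apply: eq_bigl => l; by under eq_forallb => v do rewrite H.
pose f k l := if (k \in (val a').2) && (l \in (val a').2) && (k != l) &&
     ((val c').2 == (val a').2 :\ k :\ l) &&
     [forall v, ((val c').1 v : nat) == mv a' v + (v == k) + (v == l)]%N
  then ksign K (val a').2 k * ksign K ((val a').2 :\ k) l else 0.
have -> : \sum_(k in (val a').2) ksign K (val a').2 k *
      Psi (fun v => mv a' v + (v == k))%N ((val a').2 :\ k) = \sum_k \sum_l f k l.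
  rewrite [RHS](bigID (fun k => k \in (val a').2)) /= [X in _ + X]big1 ?addr0; last first.
    by move=> k /negbTE kF; rewrite big1 // => l _; rewrite /f kF.
  apply: eq_bigr => k kF; rewrite /Psi mulr_sumr big_mkcond /= big_mkcond /=.
  apply: eq_bigr => l _; rewrite /f kF !inE.
  by case: (eqVneq k l) => [<-|kl]; rewrite /= ?andbF ?andbT ?andbA.
apply: dsum0; last by move=> k; rewrite /f eqxx !andbF.
move=> k l; rewrite /f.
have -> : (val a').2 :\ l :\ k = (val a').2 :\ k :\ l by by rewrite !setDDl setUC.
have -> : [forall v, ((val c').1 v : nat) == mv a' v + (v == l) + (v == k)]%N =
          [forall v, ((val c').1 v : nat) == mv a' v + (v == k) + (v == l)]%N.
  by apply: eq_forallb => v; rewrite addnAC.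
rewrite [l == k]eq_sym.
have [kF|kF] := boolP (k \in _); have [lF|lF] := boolP (l \in _); rewrite /= ?oppr0 //.
have [kl|kl] := boolP (k != l); rewrite /= ?oppr0 //.
case: ifP => _; last by rewrite oppr0.
by rewrite ksign_swap.
Qed.

End Alg2.

Section Witness.
Variables (T : finType) (e : rel T) (K : fieldType).
Variables (sig A : {set T}) (p : T -> T).
Hypothesis Hp_in : forall x, x \in sig -> p x \in sig.
Hypothesis Hpp : forall x, x \in sig -> p (p x) = x.
Hypothesis Hpe : forall x, x \in sig -> e x (p x).
Hypothesis HA_sub : A \subset sig.
Hypothesis HA_tr : forall x, x \in sig -> (x \in A) != (p x \in A).
Hypothesis HA_cov : forall x, x \in sig -> x \notin A -> forall w, e x w -> w \in A.
Hypothesis Hirr : irreflexive e.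
Local Open Scope ring_scope.
Local Notation sg := (sg K).

Lemma p_neq x : x \in sig -> p x != x.
Proof. by move=> xs; apply/eqP => E; have := Hpe xs; rewrite E Hirr. Qed.

Definition tr (F : {set T}) := (F \subset sig) && [forall x in sig, (x \in F) != (p x \in F)].
Definition rep (u : T) := if u \in A then u else p u.
Definition eps (F : {set T}) : K :=
  \prod_(u in F) \prod_(w in F | (rk (rep u) < rk (rep w))%N) sg (rk w < rk u)%N.
Definition phi (m : T -> nat) (F : {set T}) : K :=
  if [forall v, m v == ((v \in sig) && (v \notin F)) :> nat] && tr F then eps F else 0.

Lemma eps_neq0 F : eps F != 0.
Proof. by apply/prodf_neq0 => u _; apply/prodf_neq0 => w _; exact: sg_neq0. Qed.

Lemma phi_ext m m' F : m =1 m' -> phi m F = phi m' F.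
Proof. by move=> H; rewrite /phi; under eq_forallb => v do rewrite H. Qed.

Lemma tr_notNI (m : T -> nat) F : tr F -> (forall v, m v = ((v \in sig) && (v \notin F)) :> nat) ->
  ~~ in_NI e m.
Proof.
move=> /andP[Fs /forall_inP Ftr] mE; apply/negP => /existsP[v /forallP H].
case vs: (v \in sig); last first.
  by have := implyP (H v); rewrite /closed_nbhd inE eqxx mE vs => /(_ isT).
case vF: (v \in F).
  by have := implyP (H v); rewrite /closed_nbhd inE eqxx mE vs vF => /(_ isT).
have pvF : p v \in F by move: (Ftr v vs); rewrite vF; case: (p v \in F).
by have := implyP (H (p v)); rewrite /closed_nbhd inE Hpe // orbT mE pvF andbF => /(_ isT).
Qed.

Lemma kentry_facet i j (b : KB e i.+1 j) (c : KB e i j) :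
  (val b).2 = sig :\: A -> (forall v, mv b v = (v \in A)) -> kentry K b c = 0.
Proof.
move=> FE mE; rewrite /kentry big1 // => k /andP[kF /andP[_ /forallP Hm]].
case/andP: (svalP c) => _ /andP[_ /negP]; case.
apply/existsP; exists k; apply/forallP => w; apply/implyP; rewrite inE => /orP[/eqP->|ekw].
  by rewrite (eqP (Hm k)) eqxx addn1.
rewrite (eqP (Hm w)); move: kF; rewrite FE inE => /andP[kA ks].
by rewrite -/(mv b w) mE (HA_cov ks kA ekw).
Qed.

Lemma rep_eq x y : x \in sig -> y \in sig -> rep x = rep y -> y = x \/ y = p x.
Proof.
move=> xs ys; rewrite /rep; case xA: (x \in A); case yA: (y \in A) => E.
- by left.
- by right; rewrite E Hpp.
- by right; rewrite -E.
- by left; rewrite -(Hpp ys) -E Hpp.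
Qed.

Lemma rep_p x : x \in sig -> rep (p x) = rep x.
Proof.
move=> xs; rewrite /rep; have := HA_tr xs.
by case: (x \in A); case: (p x \in A) => //= _; rewrite Hpp.
Qed.

Lemma ksign_prod (F : {set T}) k : ksign K F k = \prod_(u in F) sg (rk u < rk k)%N.
Proof.
rewrite /ksign (bigID (fun u => (rk u < rk k)%N)) /= [X in _ * X]big1 ?mulr1; last first.
  by move=> u /andP[_ /negbTE ->].
rewrite (eq_bigl (fun u => u \in [set u in F | (rk u < rk k)%N])); last by move=> u; rewrite inE.
transitivity (\prod_(u in [set u in F | (rk u < rk k)%N]) (-1 : K)); first by rewrite prodr_const.
by apply: eq_bigr => u; rewrite inE => /andP[_ H]; rewrite /sg H.
Qed.

Definition tauf (y v : T) : K :=
  (if (rk (rep v) < rk (rep y))%N then sg (rk y < rk v)%N else 1) *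
  (if (rk (rep y) < rk (rep v))%N then sg (rk v < rk y)%N else 1).

Lemma eps_add (y : T) (F : {set T}) : y \notin F -> eps (y |: F) = eps F * \prod_(v in F) tauf y v.
Proof.
move=> yF; rewrite /eps.
under eq_bigr => u _ do rewrite big_mkcondr big_setU1 //=.
rewrite big_setU1 //= ltnn mul1r big_split /=.
under [in RHS]eq_bigr => u _ do rewrite big_mkcondr.
rewrite /tauf big_split /=.
ring.
Qed.

Lemma ksign_add1 (F : {set T}) k : k \notin F -> ksign K (k |: F) k = ksign K F k.
Proof. by move=> kF; rewrite !ksign_prod big_setU1 //= ltnn mul1r. Qed.

Lemma c_orth i j (a : KB e i.+1 j) :
  \sum_(b : KB e i j) kentry K a b * phi (mv b) (val b).2 = 0.
Proof.
rewrite kentry_sum; first last.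
- move=> k kF; rewrite /phi; case: ifP => [/andP[/forallP Hm Htr] _ | _]; last by rewrite eqxx.
  by apply: tr_notNI Htr _ => v; apply/eqP/Hm.
- exact: phi_ext.
set Fa := (val a).2; set ma := mv a.
pose good k := [forall v, (ma v + (v == k))%N == ((v \in sig) && (v \notin Fa :\ k)) :> nat]
   && tr (Fa :\ k).
case: (pickP [pred k in Fa | good k]) => [k0 /andP[k0F g0] | none]; last first.
  apply: big1 => k kF; rewrite /phi; have := none k; rewrite /= kF /= => /negbT/negbTE.
  by rewrite /good => ->; rewrite mulr0.
have g0c := g0.
case/andP: g0 => /forallP Hm0 /andP[sub0 /forall_inP tr0].
have k0s : k0 \in sig.
  by have := eqP (Hm0 k0); rewrite eqxx addn1; case: (k0 \in sig).
set k1 := p k0.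
have k1s : k1 \in sig by exact: Hp_in.
have k1F0 : k1 \in Fa :\ k0.
  by have := tr0 _ k0s; rewrite setD11 /=; case: (p k0 \in _).
have k10 : k1 != k0 by move: k1F0; rewrite !inE => /andP[H _].
have k1F : k1 \in Fa by move: k1F0; rewrite !inE => /andP[_ H].
have pk1 : p k1 = k0 by exact: Hpp.
have k01 : (k0 == k1) = false by rewrite eq_sym; exact: negbTE k10.
have k0F1 : k0 \in Fa :\ k1 by rewrite !inE eq_sym k10.
have Hm0k0 : ma k0 = 0%N by have := eqP (Hm0 k0); rewrite eqxx addn1 setD11 k0s => /= -[].
have Hm0k1 : ma k1 = 0%N.
  have := eqP (Hm0 k1); case: eqP => [E|_]; first by move: k10; rewrite E eqxx.
  by rewrite addn0 k1F0 andbF.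
have g1 : good k1.
  apply/andP; split.
    apply/forallP => v; have := eqP (Hm0 v); rewrite !inE.
    case: (eqVneq v k0) => [->|vk0] /=.
      by move=> _; rewrite Hm0k0 k01 k0F k0s.
    case: (eqVneq v k1) => [->|vk1] /=; first by move=> _; rewrite Hm0k1 k1s.
    by move=> ->.
  apply/andP; split.
    apply/subsetP => v; rewrite !inE => /andP[vk1 vF].
    case: (eqVneq v k0) => [->//|vk0]; apply: (subsetP sub0); by rewrite !inE vk0.
  apply/forall_inP => x xs; have := tr0 _ xs; rewrite !inE.
  case: (eqVneq x k0) => [->|xk0]; first by move=> _; rewrite -/k1 eqxx k01 k0F k1F.
  case: (eqVneq x k1) => [->|xk1]; first by move=> _; rewrite pk1 k01 k0F.
  have pxk0 : p x != k0 by apply: contra xk1 => /eqP E; rewrite /k1 -E Hpp.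
  have pxk1 : p x != k1 by apply: contra xk0 => /eqP E; rewrite -(Hpp xs) E pk1.
  by move=> H; rewrite pxk1; rewrite pxk0 in H.
have ngood k : k \in Fa -> k != k0 -> k != k1 -> ~~ good k.
  move=> kF kk0 kk1; apply/negP => /andP[_ /andP[_ /forall_inP H]].
  by have := H _ k0s; rewrite -/k1 !inE (eq_sym k0) (eq_sym k1) kk0 kk1 k0F k1F.
rewrite (bigD1 k0) //= (bigD1 k1) /=; last by rewrite k1F k10.
rewrite big1 ?addr0; last first.
  move=> k /andP[/andP[kF kk0] kk1]; rewrite /phi.
  by have := ngood k kF kk0 kk1; rewrite /good => /negbTE ->; rewrite mulr0.
rewrite /phi; move: g0c g1; rewrite /good => -> ->.
set F' := Fa :\ k0 :\ k1.
have E0 : Fa :\ k0 = k1 |: F' by rewrite /F' setD1K.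
have E1 : Fa :\ k1 = k0 |: F'.
  apply/setP => v; rewrite /F' !inE; case: (eqVneq v k0) => [->|vk0] /=; first by rewrite k01 k0F.
  by [].
have k1F' : k1 \notin F' by rewrite /F' setD11.
have k0F' : k0 \notin F' by rewrite /F' !inE eqxx /= andbF.
rewrite (ksignD1 K k0 k1F) (ksignD1 K k1 k0F) E0 E1 (ksign_add1 k0F') (ksign_add1 k1F').
rewrite (eps_add k1F') (eps_add k0F') !ksign_prod.
have hk : rep k1 = rep k0 by exact: rep_p.
have key : \prod_(v in F') sg (rk v < rk k0)%N * \prod_(v in F') tauf k1 v =
           \prod_(v in F') sg (rk v < rk k1)%N * \prod_(v in F') tauf k0 v.
  rewrite -!big_split; apply: eq_bigr => v vF'.
  have vs : v \in sig by apply: (subsetP sub0); move: vF'; rewrite /F' !inE => /andP[_ ->].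
  have vk0 : v != k0 by move: vF'; rewrite /F' !inE => /and3P[_ ->].
  have vk1 : v != k1 by move: vF'; rewrite /F' !inE => /and3P[->].
  have nR : rk (rep v) != rk (rep k0).
    apply/negP => /eqP /rk_inj /esym /(rep_eq k0s vs) [] /eqP; by rewrite ?(negbTE vk0) ?(negbTE vk1).
  have na0 : rk v != rk k0 by apply: contra vk0 => /eqP /rk_inj ->.
  have na1 : rk v != rk k1 by apply: contra vk1 => /eqP /rk_inj ->.
  rewrite /tauf hk.
  case: (ltngtP (rk (rep v)) (rk (rep k0))) nR => // HR _;
    rewrite /sg; case: (ltngtP (rk v) (rk k0)) na0 => // h0 _;
    case: (ltngtP (rk v) (rk k1)) na1 => // h1 _; rewrite /=; ring.
have H : forall s t E x1 x2 x3 x4 : K, x1 * x2 = x3 * x4 ->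
    s * x1 * (E * x2) + t * x3 * (E * x4) = (s + t) * E * (x1 * x2).
  move=> s t E x1 x2 x3 x4 k.
  transitivity (s * E * (x1 * x2) + t * E * (x3 * x4)); first by ring.
  by rewrite -k; ring.
rewrite (H _ _ _ _ _ _ _ key).
have -> : sg (rk k1 < rk k0)%N + sg (rk k0 < rk k1)%N = 0.
  have : rk k1 != rk k0 by apply: contra k10 => /eqP /rk_inj ->.
  by rewrite /sg; case: ltngtP => // _ _; rewrite ?addNr ?addrN.
by rewrite !mul0r.
Qed.

End Witness.

Section A4sec.
Local Open Scope ring_scope.

Lemma rank_lemma (K : fieldType) (n p q : nat) (A1 : 'M[K]_(p, n)) (B1 : 'M[K]_(n, q))
  (z : 'rV[K]_n) (c : 'cV[K]_n) :
  A1 *m B1 = 0 -> z *m B1 = 0 -> A1 *m c = 0 -> z *m c != 0 ->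
  (\rank A1 + \rank B1 < n)%N.
Proof.
move=> AB zB Ac zc.
have sA : (A1 <= kermx B1)%MS by apply/sub_kermxP.
have sz : (z <= kermx B1)%MS by apply/sub_kermxP.
have nz : ~~ (z <= A1)%MS.
  by apply/negP => /submxP[D E]; move: zc; rewrite E -mulmxA Ac mulmx0 eqxx.
have lt : (A1 < A1 + z)%MS.
  rewrite ltmxE addsmxSl /=; apply: contra nz => H; exact: submx_trans (addsmxSr _ _) H.
have h1 := rank_ltmx lt.
have h2 : (\rank (A1 + z)%MS <= \rank (kermx B1))%N by apply: mxrankS; rewrite addsmx_sub sA sz.
rewrite mxrank_ker in h2.
lia.
Qed.

Section Main.
Local Open Scope ring_scope.
Variables (T : finType) (e : rel T) (K : fieldType).
Variables (sig A : {set T}) (p : T -> T).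
Hypothesis Hp_in : forall x, x \in sig -> p x \in sig.
Hypothesis Hpp : forall x, x \in sig -> p (p x) = x.
Hypothesis Hpe : forall x, x \in sig -> e x (p x).
Hypothesis HA_sub : A \subset sig.
Hypothesis HA_tr : forall x, x \in sig -> (x \in A) != (p x \in A).
Hypothesis HA_cov : forall x, x \in sig -> x \notin A -> forall w, e x w -> w \in A.
Hypothesis Hirr : irreflexive e.
Local Open Scope ring_scope.

Local Notation phi := (phi K sig A p).

Lemma betti_pos h j (a0 : KB e h j) :
  (val a0).2 = sig :\: A -> (forall v, mv a0 v = (v \in A)) ->
  phi (mv a0) (val a0).2 != 0 -> betti e K h j != 0%N.
Proof.
move=> FE mE phinz.
pose z : 'rV[K]_#|{: KB e h j}| := delta_mx 0 (enum_rank a0).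
pose c : 'cV[K]_#|{: KB e h j}| := \col_idx phi (mv (enum_val idx)) (val (enum_val idx)).2.
have Ac : kmat e K h j *m c = 0.
  apply/matrixP => a' k; rewrite !mxE.
  under eq_bigr => idx _ do rewrite !mxE.
  rewrite (sum_enum (fun b => kentry K (enum_val a') b * phi (mv b) (val b).2)).
  exact: (c_orth K Hp_in Hpp Hpe HA_tr).
have zc : z *m c != 0.
  apply/negP => /eqP H; have := congr1 (fun M : 'M[K]_1 => M 0 0) H; rewrite -rowE !mxE enum_rankK.
  by move/eqP; rewrite (negbTE phinz).
have zE : z = delta_mx 0 (enum_rank a0) by [].
clearbody z c.
rewrite /betti; move: a0 FE mE phinz z zE c zc Ac; case: h => [|i] a0 FE mE phinz z zE c zc Ac.
  have := rank_lemma (B1 := 0 : 'M[K]_(#|{: KB e 0 j}|, 1)) (mulmx0 _ _) (mulmx0 _ _) Ac zc.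
  rewrite mxrank0; lia.
have zB : z *m kmat e K i j = 0.
  apply/rowP => k; rewrite zE -rowE !mxE enum_rankK.
  exact: (kentry_facet K HA_cov).
have := rank_lemma (kmat_sq e K i j) zB Ac zc.
lia.
Qed.

Lemma card_sigA : #|sig :\: A| = #|A|.
Proof.
have -> : sig :\: A = p @: A.
  apply/setP => x; rewrite !inE; apply/andP/imsetP.
    move=> [xA xs]; exists (p x); last by rewrite Hpp.
    by have := HA_tr xs; rewrite (negbTE xA); case: (p x \in A).
  move=> [a aA ->]; have aS := subsetP HA_sub a aA.
  by split; [have := HA_tr aS; rewrite aA; case: (p a \in A) | exact: Hp_in].
apply: card_in_imset => a b aA bA E.
by rewrite -(Hpp (subsetP HA_sub a aA)) E Hpp // (subsetP HA_sub b bA).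
Qed.

Lemma tr_compl : tr sig p (sig :\: A).
Proof.
apply/andP; split; first exact: subsetDl.
apply/forall_inP => x xs; rewrite !inE xs (Hp_in xs) !andbT.
by have := HA_tr xs; case: (x \in A); case: (p x \in A).
Qed.

Theorem witness_reg : reg_ge e K #|A|.
Proof.
set h := #|A|.
pose m0 : {ffun T -> 'I_(h + h).+1} := [ffun v => inord (v \in A)].
have m0E v : (m0 v : nat) = (v \in A).
  rewrite ffunE inordK //; case vA: (v \in A) => //=.
  have : (0 < h)%N by rewrite /h card_gt0; apply/set0Pn; exists v.
  lia.
have mA v : ((v \in sig) && (v \notin sig :\: A)) = (v \in A).
  rewrite !inE; case vA: (v \in A) => /=; last by case: (v \in sig).
  by rewrite (subsetP HA_sub v vA).
have P0 : koszul_pred e h (m0, sig :\: A).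
  rewrite /koszul_pred /= card_sigA eqxx /=.
  apply/andP; split.
    have -> : (\sum_v (m0 v : nat) = #|A|)%N.
      transitivity (\sum_(v in A) 1)%N; last exact: sum1_card.
      rewrite [RHS]big_mkcond; apply: eq_bigr => v _; rewrite m0E; by case: (v \in A).
    by [].
  apply: (tr_notNI Hpe tr_compl) => v; by rewrite m0E mA.
pose a0 : KB e h (h + h) := exist _ (m0, sig :\: A) P0.
exists h, (h + h)%N; split; last by [].
apply/eqP; apply: (betti_pos (a0 := a0)); [by [] | by move=> v; rewrite /mv /= m0E |].
rewrite /phi /=.
have -> : [forall v, (mv a0 v) == ((v \in sig) && (v \notin sig :\: A)) :> nat] = true.
  by apply/forallP => v; rewrite /mv /= m0E mA.
rewrite tr_compl /=; exact: eps_neq0.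
Qed.

End Main.

End A4sec.

Section Hall.
Variables (T : finType) (r : rel T).

Definition Nb (Y Z : {set T}) := [set y in Y | [exists x in Z, r x y]].

Definition hall_cond (Y X : {set T}) := forall Z : {set T}, Z \subset X -> #|Z| <= #|Nb Y Z|.

Definition matching (Y X : {set T}) (f : T -> T) :=
  {in X &, injective f} /\ (forall x, x \in X -> f x \in Y /\ r x (f x)).

Lemma cardsD_geq (A B : {set T}) : #|A| - #|B| <= #|A :\: B|.
Proof.
rewrite cardsD; have : #|A :&: B| <= #|B| by apply: subset_leq_card; exact: subsetIr.
lia.
Qed.

Lemma hall_rec n : forall X Y : {set T}, #|X| <= n -> hall_cond Y X -> exists f, matching Y X f.
Proof.
elim: n => [|n IH] X Y cX HX.
  exists id; split; first by move=> x y _ _.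
  have X0 : X = set0 by apply/eqP; rewrite -cards_eq0 -leqn0.
  by move=> x; rewrite X0 inE.
case: (boolP (X == set0)) => [/eqP X0|Xn0].
  exists id; split; first by move=> x y _ _.
  by move=> x; rewrite X0 inE.
case: (boolP [exists Z0 : {set T}, [&& Z0 \subset X, Z0 != set0, Z0 != X & #|Nb Y Z0| <= #|Z0|]]).
  case/existsP => Z0 /and4P[sZ0 Z0n0 Z0X cN].
  have pZ0 : Z0 \proper X by rewrite properEneq Z0X sZ0.
  have cZ0 : #|Z0| <= n by have := proper_card pZ0; lia.
  have [f1 [inj1 H1]] : exists f, matching Y Z0 f.
    apply: IH cZ0 _ => Z sZ; apply: HX; exact: subset_trans sZ sZ0.
  pose X2 := X :\: Z0; pose Y2 := Y :\: Nb Y Z0.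
  have cX2 : #|X2| <= n.
    have : #|X2| < #|X|.
      rewrite /X2 cardsD (setIidPr sZ0).
      have : 0 < #|Z0| by rewrite card_gt0.
      have : #|Z0| <= #|X| by exact: subset_leq_card.
      lia.
    lia.
  have [f2 [inj2 H2]] : exists f, matching Y2 X2 f.
    apply: IH cX2 _ => W sW.
    have dW : W :&: Z0 = set0.
      apply/setP => x; rewrite !inE; apply/negP => /andP[xW xZ].
      by have := subsetP sW x xW; rewrite inE xZ.
    have h1 := HX (W :|: Z0) ltac:(by rewrite subUset sZ0 andbT; exact: subset_trans sW (subsetDl _ _)).
    rewrite cardsU dW cards0 subn0 in h1.
    have h2 := cardsD_geq (Nb Y (W :|: Z0)) (Nb Y Z0).
    have h3 : Nb Y (W :|: Z0) :\: Nb Y Z0 \subset Nb Y2 W.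
      apply/subsetP => y; rewrite !inE => /andP[nZ /andP[yY /existsP[x /andP[xWZ rxy]]]].
      move: xWZ; rewrite ?inE => /orP[xW|xZ0].
        by rewrite nZ yY /=; apply/existsP; exists x; rewrite xW.
      by move: nZ; rewrite yY /=; case/negP; apply/existsP; exists x; rewrite xZ0.
    have h4 := subset_leq_card h3.
    lia.
  exists (fun x => if x \in Z0 then f1 x else f2 x); split.
    move=> x x' xX x'X; case xZ: (x \in Z0); case x'Z: (x' \in Z0).
    - exact: inj1.
    - move=> E; have := (H2 x' ltac:(by rewrite /X2 inE x'Z x'X)).1; rewrite -E /Y2 inE.
      have [f1Y f1r] := H1 x xZ.
      by rewrite f1Y andbT inE f1Y /=; case/negP; apply/existsP; exists x; rewrite xZ.
    - move=> E; have := (H2 x ltac:(by rewrite /X2 inE xZ xX)).1; rewrite E /Y2 inE.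
      have [f1Y f1r] := H1 x' x'Z.
      by rewrite f1Y andbT inE f1Y /=; case/negP; apply/existsP; exists x'; rewrite x'Z.
    - apply: inj2; by rewrite /X2 inE ?xZ ?x'Z.
  move=> x xX; case xZ: (x \in Z0); first exact: H1.
  have [h h'] := H2 x ltac:(by rewrite /X2 inE xZ xX); split => //.
  by move: h; rewrite /Y2 inE => /andP[].
move=> Hno.
have [x xX] := set0Pn _ Xn0.
have : 1 <= #|Nb Y [set x]| by have := HX [set x] ltac:(by rewrite sub1set); rewrite cards1.
rewrite card_gt0 => /set0Pn[y]; rewrite inE => /andP[yY /existsP[x' /andP[]]].
rewrite inE => /eqP -> rxy.
pose X' := X :\ x; pose Y' := Y :\ y.
have cX' : #|X'| <= n.
  rewrite /X'; have := cardsD1 x X; rewrite xX; lia.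
have [f' [inj' H']] : exists f, matching Y' X' f.
  apply: IH cX' _ => W sW.
  case: (boolP (W == set0)) => [/eqP -> | Wn0]; first by rewrite cards0.
  have sWX : W \subset X by exact: subset_trans sW (subsetDl _ _).
  have WX : W != X.
    apply/eqP => E; have := subsetP sW x; rewrite E xX !inE eqxx => /(_ isT).
    done.
  have hlt : #|W| < #|Nb Y W|.
    rewrite ltnNge; apply/negP => hle; move/negP: Hno; apply; apply/existsP; exists W.
    by rewrite sWX Wn0 WX hle.
  have h3 : Nb Y W :\ y \subset Nb Y' W.
    apply/subsetP => z; rewrite !inE => /andP[zy /andP[zY ex]]; by rewrite zy zY.
  have h4 := subset_leq_card h3.
  have h5 := cardsD1 y (Nb Y W).
  have : (y \in Nb Y W) <= 1 by case: (y \in _).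
  lia.
exists (fun z => if z == x then y else f' z); split.
  move=> z z' zX z'X; case: (eqVneq z x) => [->|zx]; case: (eqVneq z' x) => [->|z'x] //.
  - move=> E; have := (H' z' ltac:(by rewrite /X' !inE z'x z'X)).1; by rewrite -E /Y' !inE eqxx.
  - move=> E; have := (H' z ltac:(by rewrite /X' !inE zx zX)).1; by rewrite E /Y' !inE eqxx.
  - apply: inj'; by rewrite /X' !inE ?zx ?z'x.
move=> z zX; case: (eqVneq z x) => [->|zx]; first by split.
have [h h'] := H' z ltac:(by rewrite /X' !inE zx zX); split => //.
by move: h; rewrite /Y' !inE => /andP[].
Qed.

Theorem hall (X Y : {set T}) : hall_cond Y X -> exists f, matching Y X f.
Proof. exact: (@hall_rec #|X|). Qed.

End Hall.

Section Graph2.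
Variables (T : finType) (e : rel T) (K : fieldType).
Hypothesis esym : symmetric e.
Hypothesis eirr : irreflexive e.

Lemma inv_exists (X : {set T}) (g : T -> T) :
  {in X &, injective g} ->
  exists ginv : T -> T, forall y, y \in g @: X -> ginv y \in X /\ g (ginv y) = y.
Proof.
move=> _; exists (fun y => odflt y [pick x in X | g x == y]) => y /imsetP[x xX ->].
case: pickP => [x' /andP[x'X /eqP E] | none] /=; first by [].
by have := none x; rewrite xX eqxx.
Qed.

Lemma matched_reg (C : {set T}) (f : T -> T) :
  vertex_cover e C -> {in C &, injective f} ->
  (forall c, c \in C -> f c \notin C /\ e c (f c)) -> reg_ge e K #|C|.
Proof.
move=> cov finj Hf.
have [finv finvP] := inv_exists finj.
pose sig := C :|: f @: C.
pose p x := if x \in C then f x else finv x.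
have fC c : c \in C -> f c \in f @: C by move=> cC; apply/imsetP; exists c.
have sigE x : x \in sig -> x \notin C -> x \in f @: C.
  by rewrite inE => /orP[-> //|].
have pC x : x \in sig -> x \notin C -> p x \in C /\ f (p x) = x.
  move=> xs xC; rewrite /p (negbTE xC); exact: finvP (sigE x xs xC).
apply: (@witness_reg T e K sig C p).
- move=> x xs; case xC: (x \in C).
    by rewrite /p xC /sig inE fC ?orbT.
  by have [h _] := pC x xs (negbT xC); rewrite /sig inE h.
- move=> x xs; case xC: (x \in C).
    rewrite /p xC (negbTE (Hf x xC).1).
    have [h1 h2] := finvP (f x) (fC x xC).
    exact: finj h2.
  have [h1 h2] := pC x xs (negbT xC).
  by rewrite {1}/p h1.
- move=> x xs; case xC: (x \in C).
    by rewrite /p xC; exact: (Hf x xC).2.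
  have [h1 h2] := pC x xs (negbT xC).
  by rewrite esym; have := (Hf _ h1).2; rewrite h2.
- exact: subsetUl.
- move=> x xs; case xC: (x \in C).
    by rewrite /p xC (negbTE (Hf x xC).1).
  by have [h1 _] := pC x xs (negbT xC); rewrite h1.
- move=> x xs xC w exw.
  have := forallP (forallP cov x) w; rewrite exw /= (negbTE xC) /=; done.
Qed.

Lemma tau_le (C : {set T}) : vertex_cover e C -> tau e <= #|C|.
Proof.
move=> cov; rewrite /tau.
have : C \in index_enum {set T} by rewrite mem_index_enum.
elim: (index_enum _) => // x s IH; rewrite inE big_cons => /orP[/eqP <-|Cs].
  by rewrite cov; exact: geq_minl.
case: ifP => _; [exact: leq_trans (geq_minr _ _) (IH Cs) | exact: IH Cs].
Qed.

Lemma reg_ge_mono t t' : reg_ge e K t -> t' <= t -> reg_ge e K t'.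
Proof.
move=> [i [j [H1 H2]]] le; exists i, j; split => //; exact: leq_trans (leq_add le (leqnn i)) H2.
Qed.

Lemma cover_reg (C : {set T}) (f : T -> T) :
  vertex_cover e C -> {in C &, injective f} ->
  (forall c, c \in C -> f c \notin C /\ e c (f c)) -> reg_ge e K (tau e).
Proof.
move=> cov finj Hf; apply: reg_ge_mono (matched_reg cov finj Hf) (tau_le cov).
Qed.

End Graph2.

Section Bip.
Variables (T : finType) (e : rel T) (K : fieldType).
Hypothesis esym : symmetric e.
Hypothesis eirr : irreflexive e.

Lemma min_cover : exists C : {set T}, vertex_cover e C /\
  forall C', vertex_cover e C' -> #|C| <= #|C'|.
Proof.
have covT : vertex_cover e setT by apply/forallP => x; apply/forallP => y; rewrite in_setT implybT.
case: (arg_minnP (fun C : {set T} => #|C|) covT) => C covC HC.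
by exists C.
Qed.

Lemma cover_hall (C S : {set T}) :
  vertex_cover e C -> (forall C', vertex_cover e C' -> #|C| <= #|C'|) ->
  S \subset C -> (forall x y, x \in S -> y \in S -> ~~ e x y) ->
  hall_cond e (~: C) S.
Proof.
move=> cov Cmin sSC indS Z sZ.
pose N := Nb e (~: C) Z.
pose C' := (C :\: Z) :|: N.
have sZC : Z \subset C by exact: subset_trans sZ sSC.
have H x y : e x y -> x \in Z -> y \in C'.
  move=> exy xZ; rewrite /C' !inE.
  case yC: (y \in C).
    have yZ : y \notin Z.
      apply/negP => yZ; have := indS x y (subsetP sZ x xZ) (subsetP sZ y yZ); by rewrite exy.
    by rewrite yZ.
  by rewrite andbF /=; apply/existsP; exists x; rewrite xZ.
have cov' : vertex_cover e C'.
  apply/forallP => x; apply/forallP => y; apply/implyP => exy.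
  case xZ: (x \in Z); first by rewrite (H x y exy xZ) orbT.
  case yZ: (y \in Z); first by rewrite (H y x ltac:(by rewrite esym) yZ).
  have := forallP (forallP cov x) y; rewrite exy /= => /orP[xC|yC].
    by rewrite /C' !inE xZ xC.
  by rewrite /C' !inE yZ yC orbT.
have h1 := Cmin C' cov'.
have h2 : #|C'| <= #|C :\: Z| + #|N| by rewrite /C' cardsU; lia.
have h3 : #|C :\: Z| = #|C| - #|Z| by rewrite cardsD (setIidPr sZC).
have h4 : #|Z| <= #|C| by exact: subset_leq_card.
rewrite -/N; lia.
Qed.

Lemma bip_reg : bipartite e -> reg_ge e K (tau e).
Proof.
case=> P HP.
have [C [cov Cmin]] := min_cover.
have indP (b : bool) x y : (x \in P) = b -> (y \in P) = b -> ~~ e x y.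
  move=> hx hy; apply/negP => /HP; by rewrite hx hy eqxx.
have [f1 [inj1 H1]] : exists f, matching e (~: C) (C :&: P) f.
  apply: hall; apply: cover_hall => //; first exact: subsetIl.
  move=> x y; rewrite !inE => /andP[_ xP] /andP[_ yP]; exact: (indP true).
have [f2 [inj2 H2]] : exists f, matching e (~: C) (C :\: P) f.
  apply: hall; apply: cover_hall => //; first exact: subsetDl.
  move=> x y; rewrite !inE => /andP[xP _] /andP[yP _]; apply: (indP false); exact: negbTE.
pose f x := if x \in P then f1 x else f2 x.
apply: (@cover_reg T e K esym C f cov).
  move=> x y xC yC; rewrite /f.
  case xP: (x \in P); case yP: (y \in P).
  - apply: inj1; by rewrite inE ?xC ?yC ?xP ?yP.
  - have [_ ex] := H1 x ltac:(by rewrite inE xC xP).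
    have [_ ey] := H2 y ltac:(by rewrite inE yC yP).
    move=> E; have := HP _ _ ex; have := HP _ _ ey; rewrite xP yP -E.
    by case: (f1 x \in P).
  - have [_ ex] := H2 x ltac:(by rewrite inE xC xP).
    have [_ ey] := H1 y ltac:(by rewrite inE yC yP).
    move=> E; have := HP _ _ ex; have := HP _ _ ey; rewrite xP yP -E.
    by case: (f2 x \in P).
  - apply: inj2; by rewrite inE ?xC ?yC ?xP ?yP.
move=> c cC; rewrite /f; case cP: (c \in P).
  have [h1 h2] := H1 c ltac:(by rewrite inE cC cP).
  by move: h1; rewrite inE.
have [h1 h2] := H2 c ltac:(by rewrite inE cC cP).
by move: h1; rewrite inE.
Qed.

End Bip.

Lemma ar1 a b c n : a <= b -> b = c - 1 -> c <= n.+1 -> a <= n.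
Proof. lia. Qed.
Lemma ar2 a b : a < b -> a <= b - 1.
Proof. lia. Qed.
Lemma ar4 a b x j q m' : a + q <= m' -> a = b - x -> x <= j -> x <= b -> j + 1 <= q -> b + 1 <= m'.
Proof. lia. Qed.
Lemma ar5 m m' m'' t : m + 1 <= m' -> m' <= m'' -> m.*2 = t -> m''.*2 = t -> False.
Proof. lia. Qed.

Section VWC.
Variables (T : finType) (e : rel T) (K : fieldType).
Hypothesis esym : symmetric e.
Hypothesis eirr : irreflexive e.

Lemma indepP (S : {set T}) :
  reflect (forall x y, x \in S -> y \in S -> ~~ e x y) (independent e S).
Proof.
apply: (iffP forall_inP) => [H x y xS yS | H x xS].
  exact: (forall_inP (H x xS)).
by apply/forall_inP => y yS; exact: H.
Qed.

Lemma indepS (I M : {set T}) : I \subset M -> independent e M -> independent e I.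
Proof.
move=> sIM /indepP H; apply/indepP => x y xI yI; apply: H; exact: (subsetP sIM).
Qed.

Lemma extend_max (I : {set T}) : independent e I ->
  exists M : {set T}, I \subset M /\ maximal_independent e M.
Proof.
move=> indI.
have P0 : independent e I && (I \subset I) by rewrite indI subxx.
case: (@arg_maxnP _ I (fun M : {set T} => independent e M && (I \subset M)) (fun M => #|M|) P0) => M /andP[indM sIM] HM.
exists M; split => //; rewrite /maximal_independent indM /=.
apply/forallP => z; apply/implyP => zM; apply/negP => indz.
have := HM (z |: M); rewrite indz /= (subset_trans sIM (subsetUr _ _)) => /(_ isT).
by rewrite cardsU1 zM ltnn.
Qed.

Lemma vwc_hall (S : {set T}) : very_well_covered e -> maximal_independent e S ->
  hall_cond e (~: S) S.
Proof.
move=> [noiso Hsize] maxS.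
have indS := (andP maxS).1.
suff H : forall n (Y : {set T}), Y \subset S -> #|Y| <= n -> #|Y| <= #|Nb e (~: S) Y|.
  by move=> Y sY; exact: H.
elim=> [|n IH] Y sY cY.
  by rewrite leqn0 in cY; rewrite (eqP cY).
rewrite leqNgt; apply/negP => hlt.
set C := ~: S; set NY := Nb e C Y.
have Yn0 : Y != set0 by apply/negP => /eqP Y0; move: hlt; rewrite Y0 cards0.
have [y0 y0Y] := set0Pn _ Yn0.
have P0 : (set0 \subset NY) && independent e set0.
  by rewrite sub0set; apply/indepP => x y; rewrite inE.
case: (@arg_maxnP _ set0 (fun J : {set T} => (J \subset NY) && independent e J) (fun J => #|J|) P0)
  => J /andP[sJ indJ] HJ.
have Jmax v : v \in NY -> v \notin J -> ~~ independent e (v |: J).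
  move=> vN vJ; apply/negP => indv; have := HJ (v |: J); rewrite indv andbT.
  by rewrite subUset sub1set vN sJ => /(_ isT); rewrite cardsU1 vJ; lia.
have [w ew] := noiso y0.
have wN : w \in NY.
  rewrite /NY /Nb inE; apply/andP; split.
    rewrite /C inE; apply/negP => wS.
    by have := indepP _ indS y0 w (subsetP sY y0 y0Y) wS; rewrite ew.
  by apply/existsP; exists y0; rewrite y0Y.
have Jn0 : J != set0.
  apply/negP => /eqP J0; have := Jmax w wN; rewrite J0 inE => /(_ isT) /negP; apply.
  by apply/indepP => x z; rewrite setU0 !inE => /eqP -> /eqP ->; rewrite eirr.
have [j jJ] := set0Pn _ Jn0.
have := subsetP sJ j jJ; rewrite /NY /Nb inE => /andP[_ /existsP[y /andP[yY eyj]]].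
have cYy : #|Y :\ y| = #|Y| - 1 by rewrite [in RHS](cardsD1 y Y) yY add1n subSS subn0.
have hallY : hall_cond e C (Y :\ y).
  move=> Z sZ; apply: IH.
    exact: subset_trans sZ (subset_trans (subsetDl _ _) sY).
  exact: ar1 (subset_leq_card sZ) cYy cY.
have [phi [injphi Hphi]] := hall hallY.
have imsub : phi @: (Y :\ y) \subset NY.
  apply/subsetP => _ /imsetP[x xY ->]; have [h1 h2] := Hphi x xY.
  rewrite /NY /Nb inE h1 /=; apply/existsP; exists x; rewrite h2 andbT.
  by move: xY; rewrite in_setD1 => /andP[_ ->].
have imcard : #|phi @: (Y :\ y)| = #|Y :\ y| := card_in_imset injphi.
have imE : phi @: (Y :\ y) = NY.
  apply/eqP; rewrite eqEcard imsub imcard cYy /=; exact: ar2.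
pose Pset := [set x in Y :\ y | phi x \in J].
have PJ : phi @: Pset = J.
  apply/setP => v; apply/imsetP/idP.
    by move=> [x]; rewrite inE => /andP[_ H] ->.
  move=> vJ; have : v \in phi @: (Y :\ y) by rewrite imE (subsetP sJ).
  case/imsetP => x xY E; exists x => //; by rewrite inE xY -E vJ.
have cP : #|Pset| = #|J|.
  rewrite -PJ card_in_imset //; move=> a b aP bP; apply: injphi.
    by move: aP; rewrite inE => /andP[].
  by move: bP; rewrite inE => /andP[].
have [M [sJM maxM]] := extend_max indJ.
have indM := (andP maxM).1.
have MNJ : M :&: NY \subset J.
  apply/subsetP => v; rewrite inE => /andP[vM vN]; apply/negPn/negP => vJ.
  have := Jmax v vN vJ; rewrite (indepS _ indM) //.
  by rewrite subUset sub1set vM sJM.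
pose Q := [set x in Y | [exists j' in J, e x j']].
have QM : Q :&: M = set0.
  apply/setP => x; rewrite !inE; apply/negP => /andP[/andP[xY /existsP[j' /andP[j'J exj']]] xM].
  by have := indepP _ indM x j' xM (subsetP sJM j' j'J); rewrite exj'.
have PQ : y |: Pset \subset Q.
  apply/subsetP => x; rewrite !inE => /orP[/eqP ->|/andP[/andP[xy xY] phJ]].
    by rewrite yY; apply/existsP; exists j; rewrite jJ eyj.
  rewrite xY; apply/existsP; exists (phi x); rewrite phJ /=.
  by apply: (Hphi x _).2; rewrite in_setD1 xy xY.
have yP : y \notin Pset by rewrite !inE eqxx.
have cQ : #|J| + 1 <= #|Q|.
  by have := subset_leq_card PQ; rewrite cardsU1 yP cP addnC.
pose M' := (M :\: NY) :|: Y.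
have indM' : independent e M'.
  have cross a b : a \in M :\: NY -> b \in Y -> ~~ e b a.
    rewrite in_setD => /andP[aN aM] bY; apply/negP => eba.
    case aS : (a \in S).
      by have := indepP _ indS b a (subsetP sY b bY) aS; rewrite eba.
    move: aN; rewrite /NY /Nb inE /C inE aS /=; case/negP; apply/existsP; exists b; by rewrite bY.
  apply/indepP => a b; rewrite !in_setU => /orP[aM|aY] /orP[bM|bY].
  - by move: aM bM; rewrite !in_setD => /andP[_ aM] /andP[_ bM]; exact: (indepP _ indM).
  - by rewrite esym; exact: cross.
  - exact: cross.
  - exact: (indepP _ indS) (subsetP sY a aY) (subsetP sY b bY).
have cM' : #|M| + 1 <= #|M'|.
  have dQ : (M :\: NY) :&: Q = set0.
    apply/setP => x; rewrite in_setI in_setD in_set0; apply/negP => /andP[/andP[_ xM] xQ].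
    by have := QM; move/setP/(_ x); rewrite in_setI xQ xM in_set0.
  have sub : (M :\: NY) :|: Q \subset M'.
    rewrite /M' subUset subsetUl /=; apply: subset_trans (subsetUr _ _).
    by apply/subsetP => x; rewrite inE => /andP[].
  have h1 := subset_leq_card sub.
  rewrite cardsU dQ cards0 subn0 in h1.
  have h2 : #|M :\: NY| = #|M| - #|M :&: NY| by rewrite cardsD.
  have h3 := subset_leq_card MNJ.
  have h4 : #|M :&: NY| <= #|M| by apply: subset_leq_card; exact: subsetIl.
  exact: ar4 h1 h2 h3 h4 cQ.
have [M'' [sM' maxM'']] := extend_max indM'.
exact: ar5 cM' (subset_leq_card sM') (Hsize _ maxM) (Hsize _ maxM'').
Qed.

End VWC.

Lemma vwc_reg (T : finType) (e : rel T) (K : fieldType) :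
  symmetric e -> irreflexive e -> very_well_covered e -> reg_ge e K (tau e).
Proof.
move=> esym eirr vwc.
have ind0 : independent e set0 by apply/indepP => x y; rewrite inE.
have [S [_ maxS]] := extend_max ind0.
have indS := (andP maxS).1.
have [g [injg Hg]] := hall (vwc_hall esym eirr vwc maxS).
set C := ~: S.
have cov : vertex_cover e C.
  apply/forallP => x; apply/forallP => y; apply/implyP => exy.
  rewrite /C !inE -negb_and; apply/negP => /andP[xS yS].
  by move/indepP: indS => H; have := H x y xS yS; rewrite exy.
have imE : g @: S = C.
  apply/eqP; rewrite eqEcard; apply/andP; split.
    by apply/subsetP => _ /imsetP[x xS ->]; exact: (Hg x xS).1.
  rewrite card_in_imset //.
  have h1 := cardsC S; have h2 := vwc.2 S maxS; rewrite -/C in h1.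
  rewrite -addnn in h2; rewrite -h2 in h1.
  by move/eqP: h1; rewrite eqn_add2l => /eqP ->.
have [f Hf] := inv_exists injg.
rewrite imE in Hf.
apply: (@cover_reg T e K esym C f cov).
  move=> a b aC bC E; by rewrite -(Hf a aC).2 -(Hf b bC).2 E.
move=> c cC; have [h1 h2] := Hf c cC; split.
  by rewrite /C inE negbK.
by have := (Hg _ h1).2; rewrite h2 esym.
Qed.

Theorem proposition3p4 (T : finType) (e : rel T) (K : fieldType) :
  simple_graph e -> (bipartite e \/ very_well_covered e) ->
  reg_ge e K (tau e).
Proof.
case=> esym eirr [bip | vwc].
  exact: bip_reg.
exact: vwc_reg.
Qed.
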